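(* Let $\mathcal{L}(x^* )\in\mathbb{R}^{c\times c}$ be the weighted Laplacian of a complex-balanced mass action chemical reaction network with complex-equilibrium $x^*\in\mathbb{R}_+^m$ (defined in the context), and let $B\in\mathbb{R}^{c\times r}$ be the incidence matrix of its graph of complexes. Then for every $\gamma\in\mathbb{R}^c$, \[ \gamma^T\mathcal{L}(x^* )\,\mathrm{Exp}(\gamma)\ \ge\ 0, \] and $\gamma^T\mathcal{L}(x^* )\,\mathrm{Exp}(\gamma)=0$ if and only if $B^T\gamma=0$.
   Context: A mass action chemical reaction network has $m$ species with concentration vector $x\in\mathbb{R}_+^m$ (strictly positive entries), $c$ complexes and $r$ reactions. The complex-stoichiometric matrix $Z\in\mathbb{R}^{m\times c}$ has nonnegative integer entries; its $\alpha$-th column $Z_\alpha$ gives the composition of complex $\alpha$ in the species. The graph of complexes has the $c$ complexes as vertices and a directed edge for each reaction $j$, from its substrate complex $\mathcal{S}_j$ to its product complex $\mathcal{P}_j$; its incidence matrix $B\in\mathbb{R}^{c\times r}$ has $(\alpha,j)$ entry $-1$ if $\alpha=\mathcal{S}_j$, $+1$ if $\alpha=\mathcal{P}_j$, $0$ otherwise. Each reaction $j$ has rate constant $k_j>0$ and rate $v_j(x)=k_j\exp(Z_{\mathcal{S}_j}^T\mathrm{Ln}(x))$, and the dynamics are $\dot x=ZBv(x)$. For $x\in\mathbb{R}_+^m$, $\mathrm{Ln}(x)$ is the componentwise logarithm, and for $y\in\mathbb{R}^c$, $\mathrm{Exp}(y)$ is the componentwise exponential; $x/x^*$ denotes componentwise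 division. Let $a_{\pi\sigma}=\sum\{k_j:\ \mathcal{S}_j=\sigma,\ \mathcal{P}_j=\pi\}$ (zero if no such reaction), $A=(a_{\pi\sigma})$, $\Delta$ the diagonal matrix whose $\rho$-th diagonal entry is the $\rho$-th column sum of $A$, and $L=\Delta-A$; then $Bv(x)=-L\,\mathrm{Exp}(Z^T\mathrm{Ln}(x))$. A complex-equilibrium is $x^*\in\mathbb{R}_+^m$ with $Bv(x^* )=0$; the network is complex-balanced if a complex-equilibrium exists. Given a complex-equilibrium $x^*$, set $K(x^* )=\mathrm{diag}_{i=1}^c(\exp(Z_i^T\mathrm{Ln}(x^* )))$ and $\mathcal{L}(x^* )=LK(x^* )$ (the weighted Laplacian); it satisfies $\mathbf{1}_c^T\mathcal{L}(x^* )=0$ and $\mathcal{L}(x^* )\mathbf{1}_c=0$, where $\mathbf{1}_c$ is the all-ones vector. *)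

(* Defs.v *)
From HB Require Import structures.
From mathcomp Require Import all_boot all_order all_algebra.
From mathcomp Require Import all_classical all_reals all_analysis.
Set Implicit Arguments. Unset Strict Implicit. Unset Printing Implicit Defensive.
Import Order.TTheory GRing.Theory Num.Theory.
Local Open Scope ring_scope.

Section CRN.
Variables (R : realType) (m c r : nat).
(* Z : complex-stoichiometric matrix with nonnegative integer entries *)
Variable Z : 'M[nat]_(m, c).
(* substrate and product complexes of each reaction, and rate constants *)
Variables (S P : 'I_r -> 'I_c) (k : 'I_r -> R).

Definition ZR : 'M[R]_(m, c) := map_mx (fun n : nat => n%:R) Z.

Definition LnV n (x : 'cV[R]_n) : 'cV[R]_n := \col_i ln (x i 0).
Definition ExpV n (y : 'cV[R]_n) : 'cV[R]_n := \col_i expR (y i 0).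

Definition incidence : 'M[R]_(c, r) :=
  \matrix_(a, j) ((a == P j)%:R - (a == S j)%:R).

Definition rates (x : 'cV[R]_m) : 'cV[R]_r :=
  \col_j (k j * expR (((col (S j) ZR)^T *m LnV x) 0 0)).

Definition Amat : 'M[R]_c :=
  \matrix_(p, s) \sum_(j < r | (S j == s) && (P j == p)) k j.

Definition Delta : 'M[R]_c :=
  \matrix_(p, s) ((p == s)%:R * \sum_(q < c) Amat q s).

Definition Lap : 'M[R]_c := Delta - Amat.

Definition complex_equilibrium (x : 'cV[R]_m) : Prop :=
  (forall i, 0 < x i 0) /\ incidence *m rates x = 0.

Definition Kmat (x : 'cV[R]_m) : 'M[R]_c :=
  diag_mx (\row_i expR ((ZR^T *m LnV x) i 0)).

Definition weighted_Laplacian (x : 'cV[R]_m) : 'M[R]_c := Lap *m Kmat x.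

End CRN.

(* Main.v *)
Require Import Defs.
From HB Require Import structures.
From mathcomp Require Import all_boot all_order all_algebra.
From mathcomp Require Import all_classical all_reals all_analysis.
From mathcomp Require Import ring lra.
Import Order.TTheory GRing.Theory Num.Theory.
Local Open Scope ring_scope.

Lemma sum_ind (R : realType) c (i : 'I_c) (f : 'I_c -> R) :
  \sum_q (i == q)%:R * f q = f i.
Proof.
rewrite (bigD1 i) //= eqxx mul1r big1 ?addr0 // => q /negbTE.
by rewrite eq_sym => ->; rewrite mul0r.
Qed.

Lemma ineq_exp (R : realType) (a b : R) :
  0 <= expR a * (a - b) - (expR a - expR b).
Proof.
have h := expR_ge1Dx (b - a).
have : expR b = expR a * expR (b - a) by rewrite -expRD; congr expR; ring.
move=> ->.
have ha := expR_gt0 a.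
have : expR a * (1 + (b - a)) <= expR a * expR (b - a) by rewrite ler_pM2l.
lra.
Qed.

Lemma ineq_exp_eq (R : realType) (a b : R) :
  expR a * (a - b) - (expR a - expR b) = 0 -> a = b.
Proof.
move=> H; apply/eqP; rewrite -subr_eq0; apply/negPn/negP => hne.
have hne' : b - a != 0 by rewrite -opprB oppr_eq0.
have h := expR_gt1Dx hne'.
have e : expR b = expR a * expR (b - a) by rewrite -expRD; congr expR; ring.
rewrite e in H.
have ha := expR_gt0 a.
have : expR a * (1 + (b - a)) < expR a * expR (b - a) by rewrite ltr_pM2l.
lra.
Qed.

Theorem lemma1 (R : realType) (m c r : nat) (Z : 'M[nat]_(m, c))
  (S P : 'I_r -> 'I_c) (k : 'I_r -> R) (hk : forall j, 0 < k j)
  (xs : 'cV[R]_m) (hxs : complex_equilibrium Z S P k xs)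
  (gamma : 'cV[R]_c) :
  0 <= (gamma^T *m weighted_Laplacian Z S P k xs *m ExpV gamma) 0 0 /\
  ((gamma^T *m weighted_Laplacian Z S P k xs *m ExpV gamma) 0 0 = 0 <->
   (incidence R S P)^T *m gamma = 0).
Proof.
set kap := fun s => expR (((ZR R Z)^T *m LnV xs) s 0).
set g := fun s => gamma s 0.
set w := fun j => k j * kap (S j).
have Lap_e : forall p s, Lap S P k p s = \sum_j (S j == s)%:R * k j * ((p == s)%:R - (P j == p)%:R).
  move=> p s.
  have A_e : forall q s, Amat S P k q s = \sum_j (S j == s)%:R * (P j == q)%:R * k j.
    move=> q s'; rewrite mxE big_mkcond; apply eq_bigr => j _.
    by case: (S j == s'); case: (P j == q) => /=; ring.
  have cs : \sum_(j | (S j == s) && (P j == p)) k j = \sum_j (S j == s)%:R * (P j == p)%:R * k j.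
    by rewrite -A_e mxE.
  rewrite /Lap !mxE cs.
  under eq_bigr do rewrite A_e.
  rewrite exchange_big /=.
  under eq_bigr do under eq_bigr do rewrite (mulrC _ (P _ == _)%:R) -mulrA.
  under eq_bigr do rewrite sum_ind.
  rewrite big_distrr -sumrB; apply eq_bigr => j _.
  rewrite /=; ring.
have Q_e : (gamma^T *m weighted_Laplacian Z S P k xs *m ExpV gamma) 0 0 =
   \sum_j w j * (expR (g (S j)) * (g (S j) - g (P j))).
  rewrite /weighted_Laplacian /Kmat mul_mx_diag /w /kap /g.
  move: ((ZR R Z)^T *m LnV xs) => V; move: Lap_e; move: (Lap S P k) => L Le.
  rewrite mxE.
  under eq_bigr => j _ do rewrite !mxE.
  under eq_bigr do under eq_bigr do rewrite !mxE Le.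
  have inner : forall s, \sum_p gamma p 0 * ((\sum_j (S j == s)%:R * k j * ((p == s)%:R - (P j == p)%:R)) * expR (V s 0))
     = expR (V s 0) * \sum_j (S j == s)%:R * k j * (gamma s 0 - gamma (P j) 0).
    move=> s; under eq_bigr do rewrite big_distrl big_distrr.
    rewrite exchange_big big_distrr; apply eq_bigr => j _ /=.
    rewrite -[gamma s 0](@sum_ind _ _ s (fun q => gamma q 0)) -[gamma (P j) 0](@sum_ind _ _ (P j) (fun q => gamma q 0)).
    rewrite -sumrB !big_distrr; apply eq_bigr => q _ /=; rewrite (eq_sym q s); ring.
  under eq_bigr do rewrite inner.
  under eq_bigr do rewrite big_distrr big_distrl.
  rewrite exchange_big; apply eq_bigr => j _ /=.
  rewrite (bigD1 (S j)) //= eqxx big1 ?addr0; first (rewrite /=; ring).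
  move=> q /negbTE; rewrite eq_sym => ->; by rewrite /= !(mul0r, mulr0).
have rw : forall j, rates Z S k xs j 0 = w j.
  move=> j; rewrite /rates /w /kap mxE; congr (_ * expR _); rewrite !mxE.
  apply eq_bigr => i _; rewrite !mxE //.
have hbal : forall a, \sum_j ((a == P j)%:R - (a == S j)%:R) * w j = 0.
  move=> a; case: hxs => _ /matrixP /(_ a 0).
  rewrite [LHS]mxE [RHS]mxE.
  by under eq_bigr do rewrite rw mxE.
have CB : \sum_j w j * (expR (g (S j)) - expR (g (P j))) = 0.
  have H0 : \sum_a expR (g a) * \sum_j ((a == P j)%:R - (a == S j)%:R) * w j = 0.
    by apply big1 => a _; rewrite hbal mulr0.
  suff E : \sum_j w j * (expR (g (S j)) - expR (g (P j))) =
    - \sum_a expR (g a) * \sum_j ((a == P j)%:R - (a == S j)%:R) * w j by rewrite E H0 oppr0.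
  rewrite -sumrN; under [RHS]eq_bigr do rewrite big_distrr -sumrN.
  rewrite [RHS]exchange_big; apply eq_bigr => j _ /=.
  rewrite -[expR (g (S j))](@sum_ind _ _ (S j) (fun a => expR (g a))).
  rewrite -[expR (g (P j))](@sum_ind _ _ (P j) (fun a => expR (g a))).
  rewrite -sumrB big_distrr; apply eq_bigr => a _ /=.
  rewrite (eq_sym a (P j)) (eq_sym a (S j)) /=; ring.
have QT : (gamma^T *m weighted_Laplacian Z S P k xs *m ExpV gamma) 0 0 =
   \sum_j w j * (expR (g (S j)) * (g (S j) - g (P j)) - (expR (g (S j)) - expR (g (P j)))).
  rewrite Q_e; transitivity (\sum_j w j * (expR (g (S j)) * (g (S j) - g (P j))) -
      \sum_j w j * (expR (g (S j)) - expR (g (P j)))).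
    by rewrite CB subr0.
  rewrite -sumrB; apply: eq_bigr => j _. by rewrite [RHS]mulrBr.
have wpos : forall j, 0 < w j by move=> j; rewrite /w mulr_gt0 // expR_gt0.
have Tge : forall j, 0 <= w j * (expR (g (S j)) * (g (S j) - g (P j)) - (expR (g (S j)) - expR (g (P j)))).
  by move=> j; apply: mulr_ge0; [exact: ltW | exact: ineq_exp].
have Bg : forall j, ((incidence R S P)^T *m gamma) j 0 = g (P j) - g (S j).
  move=> j; rewrite mxE; under eq_bigr do rewrite !mxE.
  rewrite -(@sum_ind _ _ (P j) g) -(@sum_ind _ _ (S j) g) -sumrB; apply eq_bigr => a _.
  rewrite (eq_sym a (P j)) (eq_sym a (S j)) /g /=; ring.
rewrite QT; split; first by apply sumr_ge0 => j _.
split.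
  move=> H; apply/matrixP => j i; rewrite (ord1 i) Bg mxE.
  have /eqP := psumr_eq0P (fun j _ => Tge j) H (i:=j) isT.
  rewrite mulf_eq0 (gt_eqF (wpos j)) /= => /eqP /ineq_exp_eq ->; rewrite subrr.
  done.
move=> /matrixP H; apply big1 => j _.
have := H j 0; rewrite Bg mxE => /eqP; rewrite subr_eq0 => /eqP ->.
by rewrite !subrr mulr0 subrr mulr0.
Qed.
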